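(* Let $\Omega,\Omega^*$ be compact metric spaces, $c\in C(\Omega\times\Omega^* )$, and $h_0,h_1\colon[0,+\infty)\to[0,+\infty)$ two finite-valued entropy functions. Let $\mu_1,\mu_2\in\mathcal M_+(\Omega)$, $\nu\in\mathcal M_+(\Omega^* )$, and $\phi_i\in\Phi_{h,c}(\mu_i,\nu)$ for $i=1,2$. Let $U$ be a Borel subset of $\Omega$ and suppose that $\mu_1\leq\mu_2$ on $U$ and $\phi_1\leq\phi_2$ on $\Omega\setminus U$. Then \[ \phi_1\wedge\phi_2\in\Phi_{h,c}(\mu_1,\nu)\quad\text{and}\quad\phi_1\vee\phi_2\in\Phi_{h,c}(\mu_2,\nu). \] Additionally, $-h_0^*(-\phi_1(x))\leq-h_0^*(-\phi_2(x))$ for $x\in\operatorname{supp}(\mu_2-\mu_1)$.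
   Context: An entropy function is a proper, convex, lower semicontinuous $h\colon[0,\infty)\to[0,\infty]$ with $h(s)/s\to+\infty$ as $s\to\infty$; $h^*(r)=\sup_{s\geq0}rs-h(s)$ is its convex conjugate (finite and nondecreasing). For $m\in\mathcal M_+$ (finite positive Borel measures), the internal energy is $H_{h,m}(\rho)=\int h(d\rho/dm)\,dm$ if $\rho$ is positive and $\rho\ll m$, $+\infty$ otherwise. The unbalanced cost is $\mathcal{UT}_{h,c}(\mu,\nu)=\inf_{\pi\in\mathcal M_+(\Omega\times\Omega^* )}H_{h_0,\mu}(\pi_0)+H_{h_1,\nu}(\pi_1)+\int c\,d\pi$, with $\pi_0,\pi_1$ the marginals of $\pi$. With $\phi^c(y)=\sup_{x\in\Omega}\phi(x)-c(x,y)$, by duality $\mathcal{UT}_{h,c}(\mu,\nu)=\sup_{\phi\in C(\Omega)}\int_\Omega-h_0^*(-\phi)\,d\mu-\int_{\Omega^*}h_1^*(\phi^c)\,d\nu$, and $\Phi_{h,c}(\mu,\nu)$ is the set of $\phi\in C(\Omega)$ for which $\int_\Omega-h_0^*(-\phi)\,d\mu-\int_{\Omega^*}h_1^*(\phi^c)\,d\nu=\mathcal{UT}_{h,c}(\mu,\nu)$. $\wedge,\vee$ are pointwise min/max; ''$\mu_1\leq\mu_2$ on $U$'' means $\mu_1(A)\leq\mu_2(A)$ for all Borel $A\subset U$; the support of a signed measure is that of its total variation. *)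

(* Defs.v *)
From HB Require Import structures.
From mathcomp Require Import all_boot all_order all_algebra.
From mathcomp Require Import all_classical all_reals all_analysis.

Set Implicit Arguments.
Unset Strict Implicit.
Unset Printing Implicit Defensive.

Import Order.TTheory GRing.Theory Num.Theory.
Import numFieldNormedType.Exports.

Local Open Scope classical_set_scope.
Local Open Scope ring_scope.

(* Nonempty (pointed) metric spaces: mathcomp-analysis measurable types are
   pointed, so the carrier of a Borel measure space must be nonempty. *)
#[short(type="pmetricType")]
HB.structure Definition PMetric (K : numDomainType) :=
  { M of Pointed M & Metric K M }.

Definition borel {R : realType} (T : pmetricType R) : measurableType _ :=
  g_sigma_algebraType (@open T).

(* Finite-valued entropy function h : [0,+oo) -> [0,+oo) (values of h outside
   [0,+oo) are irrelevant): nonnegative, convex, lower semicontinuous on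
   [0,+oo), and superlinear (h(s)/s -> +oo as s -> +oo).  Properness is
   automatic since h is finite-valued. *)
Definition entropy_fun {R : realType} (h : R -> R) : Prop :=
  [/\ (forall s, 0 <= s -> 0 <= h s),
      (forall s t (l : R), 0 <= s -> 0 <= t -> 0 <= l <= 1 ->
          h (l * s + (1 - l) * t) <= l * h s + (1 - l) * h t),
      (forall s, 0 <= s -> forall e : R, 0 < e -> exists2 d : R, 0 < d &
          forall t, 0 <= t -> `|t - s| < d -> h s - e < h t) &
      (h s / s @[s --> +oo] --> +oo)].

Definition conj_fun {R : realType} (h : R -> R) (r : R) : R :=
  sup [set r * s - h s | s in [set s : R | 0 <= s]].

Definition ctrans {R : realType} {X Y : Type} (c : X * Y -> R)
    (phi : X -> R) (y : Y) : R :=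
  sup [set phi x - c (x, y) | x in [set: X]].

Local Open Scope ereal_scope.

(* Internal energy H_{h,m}(rho) = \int h(drho/dm) dm if rho << m, +oo
   otherwise; a density is a nonnegative measurable f with
   rho(A) = \int_A f dm for every measurable A (all such densities agree
   m-a.e., so the infimum below is just the common value, and it is +oo
   when no density exists). *)
Definition is_density {d} {T : measurableType d} {R : realType}
    (m : {measure set T -> \bar R}) (rho : set T -> \bar R) (f : T -> R) :=
  [/\ measurable_fun [set: T] f, (forall x, (0 <= f x)%R) &
      forall A, measurable A -> rho A = \int[m]_(x in A) (f x)%:E].

Definition internal_energy {d} {T : measurableType d} {R : realType}
    (h : R -> R) (m : {measure set T -> \bar R}) (rho : set T -> \bar R)
    : \bar R :=
  ereal_inf [set \int[m]_x (h (f x))%:E | f in is_density m rho].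

(* Unbalanced transport cost UT_{h,c}(mu,nu): infimum over finite positive
   Borel measures pi on Omega x Omega^* (Borel sigma-algebra of the product of
   two compact metric spaces = product of Borel sigma-algebras). *)
Definition UT {R : realType} {X Y : pmetricType R} (h0 h1 : R -> R)
    (c : X * Y -> R)
    (mu : {finite_measure set borel X -> \bar R})
    (nu : {finite_measure set borel Y -> \bar R}) : \bar R :=
  ereal_inf [set internal_energy h0 mu (pushforward pi fst)
                 + internal_energy h1 nu (pushforward pi snd)
                 + \int[pi]_z (c z)%:E
            | pi in [set: {finite_measure set (borel X * borel Y)%type -> \bar R}]].

Definition dual_fun {R : realType} {X Y : pmetricType R} (h0 h1 : R -> R)
    (c : X * Y -> R)
    (mu : {finite_measure set borel X -> \bar R})
    (nu : {finite_measure set borel Y -> \bar R}) (phi : X -> R) : \bar R :=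
  \int[mu]_x (- conj_fun h0 (- phi x))%:E
  - \int[nu]_y (conj_fun h1 (ctrans c phi y))%:E.

Definition Phi {R : realType} {X Y : pmetricType R} (h0 h1 : R -> R)
    (c : X * Y -> R)
    (mu : {finite_measure set borel X -> \bar R})
    (nu : {finite_measure set borel Y -> \bar R}) : set (X -> R) :=
  [set phi | continuous phi /\ dual_fun h0 h1 c mu nu phi = UT h0 h1 c mu nu].

Definition measure_le_on {d} {T : measurableType d} {R : realType}
    (mu1 mu2 : set T -> \bar R) (U : set T) : Prop :=
  forall A, measurable A -> A `<=` U -> mu1 A <= mu2 A.

Definition total_variation {d} {T : measurableType d} {R : realType}
    (s : set T -> R) (N : set T) : \bar R :=
  ereal_sup [set (\sum_(i < n) `|s (A i)|)%:E
            | n in [set: nat] & A in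
              [set A : nat -> set T | (forall i, measurable (A i) /\ A i `<=` N)
                   /\ (forall i j, i <> j -> A i `&` A j = set0)]].

Definition signed_support {R : realType} {X : pmetricType R}
    (mu1 mu2 : {finite_measure set borel X -> \bar R}) : set X :=
  [set x | forall N : set X, open N -> N x ->
     total_variation (fun A : set (borel X) => fine (mu2 A) - fine (mu1 A))%R N
       != 0].

(* Main.v *)
Require Import Defs.
From HB Require Import structures.
From mathcomp Require Import all_boot all_order all_algebra.
From mathcomp Require Import all_classical all_reals all_analysis.
From mathcomp Require Import ring lra measurable_realfun.
Import Order.TTheory GRing.Theory Num.Theory.
Import numFieldNormedType.Exports.
Local Open Scope classical_set_scope.
Local Open Scope ring_scope.
Set Implicit Arguments.
Unset Strict Implicit.
Section ConjFacts.
Variable R : realType.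
Implicit Types h : R -> R.

Lemma conj_bound h : entropy_fun h -> forall r, exists B, forall s, 0 <= s -> r * s - h s <= B.
Proof.
case=> h0 _ _ hinf r.
have [M [Mr HM]] := cvgry_ge hinf r.
exists (`|r| * `|M|) => s s0.
have hs0 := h0 s s0.
have H1 : r * s - h s <= r * s by rewrite lerBlDr lerDl.
have [sM|Ms] := leP s M.
  apply: (le_trans H1); apply: (le_trans (ler_norm _)); rewrite normrM ler_wpM2l //.
  by rewrite ger0_norm // (le_trans sM) // ler_norm.
have := HM s Ms; rewrite /=.
have [->|sn0] := eqVneq s 0.
  move=> _; rewrite mulr0 sub0r; apply: (le_trans _ (mulr_ge0 (normr_ge0 _) (normr_ge0 _))).
  by rewrite oppr_le0; apply: h0.
have sp : 0 < s by rewrite lt_neqAle eq_sym sn0 s0.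
rewrite ler_pdivlMr // => rs.
by apply: (le_trans _ (mulr_ge0 (normr_ge0 _) (normr_ge0 _))); rewrite subr_le0.
Qed.

Lemma conj_has_ub h : entropy_fun h -> forall r,
  has_ubound [set r * s - h s | s in [set s : R | 0 <= s]].
Proof.
move=> hh r; have [B HB] := conj_bound hh r.
by exists B => _ [s s0 <-]; apply: HB.
Qed.

Lemma conj_ne h r : [set r * s - h s | s in [set s : R | 0 <= s]] !=set0.
Proof. by exists (r * 0 - h 0); exists 0 => //=. Qed.

Lemma conj_FY h : entropy_fun h -> forall r s, 0 <= s -> r * s - h s <= conj_fun h r.
Proof.
move=> hh r s s0; have := ub_le_sup (conj_has_ub hh r); apply.
by exists s.
Qed.

Lemma conj_ge h : entropy_fun h -> forall r, - h 0 <= conj_fun h r.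
Proof.
move=> hh r; have := conj_FY hh r (lexx 0).
by rewrite mulr0 sub0r.
Qed.

Lemma conj_le h : entropy_fun h -> forall r B, (forall s, 0 <= s -> r * s - h s <= B) ->
  conj_fun h r <= B.
Proof.
move=> hh r B HB; apply: ge_sup; first exact: conj_ne.
by move=> _ [s s0 <-]; apply: HB.
Qed.

Lemma conj_mono h : entropy_fun h -> {homo conj_fun h : a b / a <= b}.
Proof.
move=> hh a b ab; apply: conj_le => // s s0.
apply: le_trans (conj_FY hh b s0).
by rewrite lerD2r ler_wpM2r.
Qed.

Lemma conj_convex h : entropy_fun h -> forall l a b, 0 <= l <= 1 ->
  conj_fun h (l * a + (1 - l) * b) <= l * conj_fun h a + (1 - l) * conj_fun h b.
Proof.
move=> hh l a b /andP[l0 l1]; apply: conj_le => // s s0.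
have -> : (l * a + (1 - l) * b) * s - h s = l * (a * s - h s) + (1 - l) * (b * s - h s).
  by ring.
apply: lerD; apply: ler_wpM2l; rewrite ?subr_ge0 //; exact: conj_FY.
Qed.

End ConjFacts.

Section ConvexCont.
Variable R : realType.
Variable F : R -> R.
Hypothesis Fc : forall l a b, 0 <= l <= 1 ->
  F (l * a + (1 - l) * b) <= l * F a + (1 - l) * F b.

Let Fup r u : 0 <= u <= 1 -> F (r + u) <= F r + u * (F (r + 1) - F r).
Proof.
move=> /andP[u0 u1].
have := Fc (r + 1) r (_ : 0 <= u <= 1); rewrite u0 u1 => /(_ isT).
have -> : u * (r + 1) + (1 - u) * r = r + u by ring.
move=> H; apply: (le_trans H); rewrite le_eqVlt; apply/orP; left; apply/eqP; ring.
Qed.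

Let Fdown r u : 0 <= u <= 1 -> F (r - u) <= F r + u * (F (r - 1) - F r).
Proof.
move=> /andP[u0 u1].
have := Fc (r - 1) r (_ : 0 <= u <= 1); rewrite u0 u1 => /(_ isT).
have -> : u * (r - 1) + (1 - u) * r = r - u by ring.
move=> H; apply: (le_trans H); rewrite le_eqVlt; apply/orP; left; apply/eqP; ring.
Qed.

Let Fmid r u : F r <= (F (r + u) + F (r - u)) / 2.
Proof.
have := Fc (r + u) (r - u) (_ : 0 <= 2^-1 <= 1).
rewrite invr_ge0 ler0n invf_le1 ?ler1n ?ltr0n //= => /(_ isT).
have -> : 2^-1 * (r + u) + (1 - 2^-1) * (r - u) = r :> R by field.
move=> H; apply: (le_trans H); rewrite le_eqVlt; apply/orP; left; apply/eqP; by field.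
Qed.

Lemma convex_lip r y : `|y - r| <= 1 ->
  `|F y - F r| <= (`|F (r + 1) - F r| + `|F (r - 1) - F r|) * `|y - r|.
Proof.
set C := `|F (r + 1) - F r| + `|F (r - 1) - F r|.
have C1 : F (r + 1) - F r <= C by apply: (le_trans (ler_norm _)); rewrite /C lerDl.
have C2 : F (r - 1) - F r <= C by apply: (le_trans (ler_norm _)); rewrite /C lerDr.
have C0 : 0 <= C by rewrite /C addr_ge0.
have [ry|yr] := leP r y.
  rewrite (ger0_norm (_ : 0 <= y - r)) ?subr_ge0 // => u1.
  set u := y - r.
  have u0 : 0 <= u by rewrite /u subr_ge0.
  have hu : 0 <= u <= 1 by rewrite u0 u1.
  have -> : y = r + u by rewrite /u; ring.
  have a := Fup r hu; have b := Fdown r hu; have m := Fmid r u.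
  rewrite ler_norml; apply/andP; split.
    have : u * (F (r - 1) - F r) <= u * C by apply: ler_wpM2l.
    nra.
  have : u * (F (r + 1) - F r) <= u * C by apply: ler_wpM2l.
  nra.
rewrite (ltr0_norm (_ : y - r < 0)) ?subr_lt0 // => u1.
set u := - (y - r).
have u0 : 0 <= u by rewrite /u oppr_ge0 subr_le0 ltW.
have hu : 0 <= u <= 1 by rewrite u0 u1.
have -> : y = r - u by rewrite /u; ring.
have a := Fup r hu; have b := Fdown r hu; have m := Fmid r u.
rewrite ler_norml; apply/andP; split.
  have : u * (F (r + 1) - F r) <= u * C by apply: ler_wpM2l.
  nra.
have : u * (F (r - 1) - F r) <= u * C by apply: ler_wpM2l.
nra.
Qed.

Lemma convex_continuous : continuous F.
Proof.
move=> r; apply/cvgrPdist_lt => e e0.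
set C := `|F (r + 1) - F r| + `|F (r - 1) - F r|.
have C0 : 0 <= C by rewrite /C addr_ge0.
have d0 : 0 < Num.min 1 (e / (C + 1)).
  by rewrite lt_min ltr01 divr_gt0 // ltr_wpDl.
near=> y.
have : `|r - y| < Num.min 1 (e / (C + 1)).
  by near: y; exact: (@cvgr_dist_lt _ _ _ (nbhs r) _ id r cvg_id _ d0).
rewrite lt_min => /andP[y1 ye].
have y1' : `|y - r| <= 1 by rewrite distrC ltW.
have ye' : `|y - r| < e / (C + 1) by rewrite distrC.
rewrite distrC; apply: (le_lt_trans (convex_lip y1')); rewrite -/C.
apply: (le_lt_trans (ler_wpM2l C0 (ltW ye'))).
rewrite mulrC -mulrA gtr_pMr // mulrC ltr_pdivrMr ?ltr_wpDl // mul1r.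
by rewrite ltrDl.
Unshelve. all: by end_near.
Qed.

End ConvexCont.

Lemma conj_continuous (R : realType) (h : R -> R) : entropy_fun h -> continuous (conj_fun h).
Proof. by move=> hh; apply: convex_continuous => l a b; apply: conj_convex. Qed.
Section Topo.
Variable R : realType.

Lemma lsc_measurable (T : pmetricType R) (f : T -> R) :
  (forall t, open [set x | t < f x]) -> measurable_fun [set: borel T] f.
Proof.
move=> fo.
apply: (@measurability _ _ (borel T) R setT f (@RGenOInfty.G R)).
  exact: RGenOInfty.measurableE.
move=> _ [_ [t ->] <-]; apply: sub_sigma_algebra.
rewrite setTI (_ : _ @^-1` _ = [set x | t < f x]); first exact: fo.
by apply/seteqP; split => x /=; rewrite in_itv /= andbT.
Qed.

Lemma cont_open_gt (T : topologicalType) (f : T -> R) t : continuous f -> open [set x | t < f x].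
Proof.
move=> fc; rewrite (_ : [set x | t < f x] = f @^-1` `]t, +oo[); last first.
  by apply/seteqP; split => x /=; rewrite in_itv /= andbT.
apply: open_comp; first by move=> x _; apply: fc.
exact: rray_open.
Qed.

Lemma cont_measurable (T : pmetricType R) (f : T -> R) :
  continuous f -> measurable_fun [set: borel T] f.
Proof. by move=> fc; apply: lsc_measurable => t; apply: cont_open_gt. Qed.

Lemma cont_bounded (T : topologicalType) (f : T -> R) :
  compact [set: T] -> continuous f -> exists M, 0 <= M /\ forall x, `|f x| <= M.
Proof.
move=> cT fc.
have := compact_bounded (continuous_compact (continuous_subspaceT fc) cT).
move=> [M [Mr HM]].
exists (`|M| + 1); split; first by rewrite addr_ge0.
move=> x; apply: (HM (`|M| + 1)); first by rewrite (le_lt_trans (ler_norm _)) // ltrDl.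
by exists x.
Qed.

End Topo.
Section Ctrans.
Variable R : realType.
Variables (X Y : pmetricType R) (c : X * Y -> R).

Lemma ctrans_ne (phi : X -> R) y : [set phi x - c (x, y) | x in [set: X]] !=set0.
Proof. by exists (phi point - c (point, y)); exists point. Qed.

Lemma ctrans_ge (phi : X -> R) B : (forall x y, phi x - c (x, y) <= B) ->
  forall x y, phi x - c (x, y) <= ctrans c phi y.
Proof.
move=> hB x y; have := @ub_le_sup _ [set phi x - c (x, y) | x in [set: X]].
apply; last by exists x.
by exists B => _ [x' _ <-].
Qed.

Lemma ctrans_le (phi : X -> R) y B : (forall x, phi x - c (x, y) <= B) ->
  ctrans c phi y <= B.
Proof.
move=> hB; apply: ge_sup; first exact: ctrans_ne.
by move=> _ [x _ <-].
Qed.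

Lemma ctrans_lsc (phi : X -> R) B : continuous c -> (forall x y, phi x - c (x, y) <= B) ->
  forall t, open [set y | t < ctrans c phi y].
Proof.
move=> cc hB t.
have -> : [set y | t < ctrans c phi y] = \bigcup_(x in [set: X]) [set y | t < phi x - c (x, y)].
  apply/seteqP; split => y /=.
    move=> /(sup_gt (ctrans_ne phi y)) [_ [x _ <-]] tx.
    by exists x.
  move=> [x _ tx]; apply: (lt_le_trans tx); exact: ctrans_ge hB x y.
apply: bigcup_open => x _; apply: cont_open_gt => y.
apply: (@continuousB _ _ _ (fun=> phi x) (fun y => c (x, y))).
  exact: cvg_cst.
apply: (@continuous_comp _ _ _ (fun y => (x, y)) c); last exact: cc.
by apply: cvg_pair; [exact: cvg_cst | exact: cvg_id].
Qed.

End Ctrans.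
Section IntFacts.
Local Open Scope ereal_scope.
Context d (T : measurableType d) (R : realType).
Import HBNNSimple.

Lemma le_integral_on (m1 m2 : {measure set T -> \bar R}) (U : set T) (g : T -> \bar R) :
  (forall A, measurable A -> A `<=` U -> m1 A <= m2 A) ->
  (forall x, 0 <= g x) -> (forall x, ~ U x -> g x = 0) ->
  \int[m1]_x g x <= \int[m2]_x g x.
Proof.
move=> m12 g0 gU.
rewrite !ge0_integralE//=.
apply: ge_ereal_sup => _ [h /= hg <-].
apply: le_ereal_sup_tmp; exists (sintegral m2 h); first by exists h.
rewrite !sintegralE; apply: lee_fsum => // r [t _ <-].
have [->|ht0] := eqVneq (h t) 0%R; first by rewrite !mul0e.
apply: lee_wpmul2l; first by rewrite lee_fin fun_ge0.
apply: m12; first by rewrite -[X in measurable X]setTI; apply: measurable_funP.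
move=> x /= hx; apply/not_notP => Ux.
have := hg x; rewrite patch_setT gU // lee_fin hx => H.
by move: ht0; rewrite eq_le H fun_ge0.
Qed.

Lemma density_integral (m rho : {measure set T -> \bar R}) (g : T -> R) :
  measurable_fun [set: T] g -> (forall x, (0 <= g x)%R) ->
  (forall A, measurable A -> rho A = \int[m]_(x in A) (g x)%:E) ->
  forall f : T -> \bar R, (forall x, 0 <= f x) -> measurable_fun [set: T] f ->
  \int[m]_x (f x * (g x)%:E) = \int[rho]_x f x.
Proof.
move=> mg g0 rhoE f f0 mf.
have mE : measurable [set: T] by [].
pose h := nnsfun_approx mE mf.
have -> : \int[rho]_x f x =
    lim (\int[rho]_x (EFin \o h n) x @[n --> \oo]).
  have fE x : [set: T] x -> f x = lim ((EFin \o h n) x @[n --> \oo]).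
    by move=> Ex; apply/esym/cvg_lim => //; exact: cvg_nnsfun_approx.
  under eq_integral => x /[!inE] /fE -> //.
  apply: monotone_convergence => //.
  - move=> n; apply/measurable_EFinP.
    by apply: (measurable_funS measurableT) => //; exact/measurable_funP.
  - by move=> n x Ex //=; rewrite lee_fin.
  - by move=> x Ex a b ab; rewrite lee_fin; exact/lefP/nd_nnsfun_approx.
have -> : \int[m]_x (f x * (g x)%:E) =
    lim (\int[m]_x ((EFin \o h n) x * (g x)%:E) @[n --> \oo]).
  have fg x : [set: T] x -> f x * (g x)%:E = lim (((EFin \o h n) x * (g x)%:E) @[n --> \oo]).
    by move=> Ex; apply/esym/cvg_lim => //; apply: cvgeZr;
      [by []|exact: cvg_nnsfun_approx].
  under eq_integral => x /[!inE] /fg -> //.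
  apply: monotone_convergence => [//| | |].
  - move=> n; apply/emeasurable_funM; apply/measurable_funTS.
      exact/measurable_EFinP.
    exact/measurable_EFinP.
  - by move=> n x Ex /=; rewrite mule_ge0 ?lee_fin.
  - by move=> x Ex a b ab/=; rewrite lee_wpmul2r ?lee_fin//; exact/lefP/nd_nnsfun_approx.
suff suf n : \int[m]_x ((EFin \o h n) x * (g x)%:E) =
    \int[rho]_x (EFin \o h n) x.
  by under eq_fun do rewrite suf.
transitivity (\int[rho]_x
   (\sum_(y \in range (h n)) (y * \1_(h n @^-1` [set y]) x)%:E)); last first.
  by apply: eq_integral => t tE; rewrite /= fimfunE -fsumEFin.
have indich k r : measurable_fun [set: T] (fun x => (r * \1_(h k @^-1` [set r]) x)%:E).
  by apply: (measurable_comp measurableT) => //; exact: measurable_funM.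
rewrite ge0_integral_fsum//; last by move=> k y Ey; exact: nnfun_muleindic_ge0.
transitivity (\int[m]_x (\sum_(y \in range (h n))
    (y * \1_(h n @^-1` [set y]) x)%:E * (g x)%:E)).
  under [RHS]eq_integral => x xE.
    rewrite -ge0_mule_fsuml => [|y]; last exact: nnfun_muleindic_ge0.
    rewrite fsumEFin // -(fimfunE _ x); over.
  by [].
rewrite ge0_integral_fsum//; last 2 first.
  - move=> y; apply: emeasurable_funM => //; apply: measurable_funTS.
    exact/measurable_EFinP.
  - by move=> k y Ey; apply: mule_ge0; [exact: nnfun_muleindic_ge0 | rewrite lee_fin].
apply: eq_fsbigr => r rhn.
under [RHS]eq_integral do rewrite EFinM.
rewrite integralZl_indic_nnsfun => //.
under eq_integral do rewrite EFinM -muleA.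
rewrite ge0_integralZl//.
- under eq_integral do rewrite muleC.
  rewrite (eq_integral ((EFin \o g) \_ (h n @^-1` [set r]))); last first.
    by move=> x xE; rewrite epatch_indic.
  by rewrite -integral_mkcondr -rhoE// integral_indic// setIT // setTI.
- by apply: emeasurable_funM; apply/measurable_EFinP => //.
- by move=> t Et; rewrite mule_ge0 ?lee_fin.
- by move: rhn; rewrite inE => -[t _ <-]; rewrite lee_fin.
Qed.


Lemma funeposMr (f : T -> \bar R) (g : T -> R) x : (0 <= g x)%R ->
  (fun x => f x * (g x)%:E)^\+ x = f^\+ x * (g x)%:E.
Proof.
move=> g0; rewrite !funeposE /=.
have [fx0|fx0] := leP 0 (f x).
  by rewrite max_l //; apply: mule_ge0 => //; rewrite lee_fin.
rewrite max_r ?mul0e //.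
by apply: mule_le0_ge0; rewrite ?lee_fin // ltW.
Qed.

Lemma funenegMr (f : T -> \bar R) (g : T -> R) x : (0 <= g x)%R ->
  (fun x => f x * (g x)%:E)^\- x = f^\- x * (g x)%:E.
Proof.
move=> g0; rewrite !funenegE /=.
have [fx0|fx0] := leP 0 (f x).
  have h1 : - (f x * (g x)%:E) <= 0 by rewrite oppe_le0; apply: mule_ge0 => //; rewrite lee_fin.
  have h2 : - f x <= 0 by rewrite oppe_le0.
  by rewrite (max_r h1) (max_r h2) mul0e.
have h1 : 0 <= - (f x * (g x)%:E).
  by rewrite oppe_ge0; apply: mule_le0_ge0; rewrite ?lee_fin // ltW.
have h2 : 0 <= - f x by rewrite oppe_ge0 ltW.
by rewrite (max_l h1) (max_l h2) mulNe.
Qed.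

Lemma density_integral_gen (m rho : {measure set T -> \bar R}) (g : T -> R) :
  measurable_fun [set: T] g -> (forall x, (0 <= g x)%R) ->
  (forall A, measurable A -> rho A = \int[m]_(x in A) (g x)%:E) ->
  forall f : T -> \bar R, measurable_fun [set: T] f ->
  \int[m]_x (f x * (g x)%:E) = \int[rho]_x f x.
Proof.
move=> mg g0 rhoE f mf.
rewrite integralE [RHS]integralE.
congr (_ - _).
  under eq_integral do rewrite funeposMr //.
  by apply: density_integral => //; exact: measurable_funepos.
under eq_integral do rewrite funenegMr //.
by apply: density_integral => //; exact: measurable_funeneg.
Qed.

Lemma le_integral_nm (m : {measure set T -> \bar R}) (f g : T -> \bar R) :
  (forall x, 0 <= g x) -> (forall x, f x <= g x) ->
  \int[m]_x f x <= \int[m]_x g x.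
Proof.
move=> g0 fg.
rewrite [X in X <= _]integralE.
apply: (@le_trans _ _ (\int[m]_x f^\+ x)).
  by apply: geeDl; rewrite oppe_le0 integral_ge0 // => x _; apply: funeneg_ge0.
rewrite (ge0_integralE _ (fun x _ => funepos_ge0 f x)) (ge0_integralE _ (fun x _ => g0 x)).
apply: ge_ereal_sup => _ [h /= hg <-].
apply: ereal_sup_ubound; exists h => //= x.
rewrite patch_setT; apply: (le_trans (hg x)); rewrite patch_setT funeposE.
by rewrite ge_max g0 fg.
Qed.

End IntFacts.
Section Energy.
Local Open Scope ereal_scope.
Context d (T : measurableType d) (R : realType).

Lemma bounded_integrable (m : {measure set T -> \bar R}) (f : T -> R) (B : R) :
  m setT < +oo -> measurable_fun setT f -> (forall x, (`|f x| <= B)%R) ->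
  m.-integrable setT (EFin \o f).
Proof.
move=> mfin mf fB; apply: measurable_bounded_integrable => //.
exists B; split; first exact: num_real.
move=> M BM x _ /=; apply: (le_trans (fB x)); exact: ltW.
Qed.

Lemma conj_bounded (h : R -> R) : entropy_fun h -> forall (u : T -> R) (B : R),
  (forall x, (`|u x| <= B)%R) -> forall x, (`|conj_fun h (u x)| <= `|conj_fun h (- B)| + `|conj_fun h B|)%R.
Proof.
move=> hh u B uB x.
have := uB x; rewrite ler_norml => /andP[l r].
have a := conj_mono hh l; have b := conj_mono hh r.
have n1 := ler_norm (conj_fun h (- B)); have n2 := ler_norm (- conj_fun h (- B)).
have n3 := ler_norm (conj_fun h B); have n4 := normr_ge0 (conj_fun h B).
rewrite normrN in n2.
rewrite ler_norml; apply/andP; split; lra.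
Qed.

Lemma energy_lb (h : R -> R) (hh : entropy_fun h) (m rho : {measure set T -> \bar R})
  (u : T -> R) (B : R) :
  m setT < +oo -> rho setT < +oo -> measurable_fun setT u -> (forall x, (`|u x| <= B)%R) ->
  \int[rho]_x (u x)%:E - \int[m]_x (conj_fun h (u x))%:E <= internal_energy h m rho.
Proof.
move=> mfin rfin mu uB.
apply/ereal_infP => _ [f [mf f0 rhoE] <-].
have intf : m.-integrable setT (EFin \o f).
  apply/integrableP; split; first exact/measurable_EFinP.
  rewrite (eq_integral (fun x => (f x)%:E)); last by move=> x _ /=; rewrite ger0_norm.
  by rewrite -rhoE.
have intuf : m.-integrable setT (EFin \o (fun x => u x * f x)%R).
  apply: (le_integrable measurableT _ _ (integrableZl measurableT B intf)).
    by apply/measurable_EFinP; apply: measurable_funM.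
  move=> x _ /=; rewrite lee_fin !normrM ler_wpM2r //.
  by rewrite (le_trans (uB x)) // ler_norm.
have mc : measurable_fun setT (fun x => conj_fun h (u x)).
  exact: measurableT_comp (continuous_measurable_fun (conj_continuous hh)) mu.
have intc : m.-integrable setT (EFin \o (fun x => conj_fun h (u x))).
  exact: bounded_integrable mfin mc (conj_bounded hh uB).
have E1 : \int[rho]_x (u x)%:E = \int[m]_x (u x * f x)%:E.
  rewrite -(density_integral_gen mf f0 rhoE (f := EFin \o u)); last exact/measurable_EFinP.
  by apply: eq_integral => x _; rewrite EFinM.
rewrite E1 -integralB_EFin //.
apply: le_integral_nm => x; first by rewrite lee_fin; case: hh => hh0 _ _ _; apply: hh0.
rewrite lee_fin; have := conj_FY hh (u x) (f0 x); lra.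
Qed.

Lemma le_integral_gen (m : {measure set T -> \bar R}) (f g : T -> \bar R) :
  (forall x, f x <= g x) -> \int[m]_x f x <= \int[m]_x g x.
Proof.
move=> fg; rewrite [X in X <= _]integralE [X in _ <= X]integralE.
apply: leeB.
  apply: le_integral_nm => x; first exact: funepos_ge0.
  by rewrite !funeposE; apply: le_max2 => //; exact: fg.
apply: le_integral_nm => x; first exact: funeneg_ge0.
by rewrite !funenegE; apply: le_max2 => //; rewrite leeN2; exact: fg.
Qed.

End Energy.

Section Weak.
Local Open Scope ereal_scope.
Variable R : realType.
Variables (X Y : pmetricType R) (c : X * Y -> R) (h0 h1 : R -> R).
Variables (mu : {finite_measure set borel X -> \bar R}) (nu : {finite_measure set borel Y -> \bar R}).
Hypotheses (cX : compact [set: X]) (cY : compact [set: Y]) (cc : continuous c)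
  (hh0 : entropy_fun h0) (hh1 : entropy_fun h1).

Lemma c_bounded : exists K, (0 <= K)%R /\ forall z, (`|c z| <= K)%R.
Proof. by apply: cont_bounded => //; rewrite -setXTT; exact: compact_setX. Qed.

Lemma fin_lt (d : measure_display) (T : measurableType d) (m : {finite_measure set T -> \bar R}) :
  m setT < +oo.
Proof. by rewrite ltey_eq fin_num_measure. Qed.

Lemma ereal_arith (A Ac B P Pn Q I0 I1 C : \bar R) :
  A \is a fin_num -> Ac \is a fin_num -> B \is a fin_num -> P \is a fin_num ->
  Pn \is a fin_num -> Q \is a fin_num ->
  Pn - Ac <= I0 -> Q - B <= I1 -> P - Q <= C -> Pn + P = 0 -> A + Ac = 0 ->
  A - B <= I0 + I1 + C.
Proof.
move=> fA fAc fB fP fPn fQ l1 l2 l3 e1 e2.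
apply: le_trans (leeD (leeD l1 l2) l3); clear l1 l2 l3.
move: fA fAc fB fP fPn fQ e1 e2.
case: A => // a _; case: Ac => // ac _; case: B => // b _; case: P => // p _.
case: Pn => // pn _; case: Q => // q _.
rewrite -!EFinD => -[e1] [e2]; rewrite lee_fin; lra.
Qed.

Lemma weak_duality (phi : X -> R) : continuous phi ->
  dual_fun h0 h1 c mu nu phi <= UT h0 h1 c mu nu.
Proof.
move=> phic.
have [K [K0 cK]] := c_bounded.
have [Mp [Mp0 phiM]] := cont_bounded cX phic.
set psi := ctrans c phi.
have hB : forall x y, (phi x - c (x, y) <= Mp + K)%R.
  move=> x y; have := phiM x; have := cK (x, y).
  rewrite !ler_norml => /andP[? ?] /andP[? ?]; lra.
have psiB : forall y, (`|psi y| <= Mp + K)%R.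
  move=> y; rewrite ler_norml; apply/andP; split.
    have := ctrans_ge hB point y; have := phiM point; have := cK (point, y).
    rewrite !ler_norml => /andP[? ?] /andP[? ?]; rewrite /psi; lra.
  by apply: ctrans_le => x; apply: hB.
have mphi : measurable_fun [set: borel X] phi := cont_measurable phic.
have mpsi : measurable_fun [set: borel Y] psi := lsc_measurable (ctrans_lsc cc hB).
apply/ereal_infP => _ [pi _ <-].
have pifin := fin_lt pi.
have mphi1 : measurable_fun [set: (borel X * borel Y)%type] (fun z => phi z.1).
  exact: measurableT_comp mphi measurable_fst.
have mnphi1 : measurable_fun [set: (borel X * borel Y)%type] (fun z => - phi z.1)%R.
  exact: measurable_funN mphi1.
have mpsi2 : measurable_fun [set: (borel X * borel Y)%type] (fun z => psi z.2).
  exact: measurableT_comp mpsi measurable_snd.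
have intP : pi.-integrable setT (EFin \o (fun z => phi z.1)).
  exact: bounded_integrable pifin mphi1 (fun z => phiM z.1).
have intNP : pi.-integrable setT (EFin \o (fun z => - phi z.1)%R).
  by apply: bounded_integrable pifin mnphi1 _ => z; rewrite normrN; exact: phiM z.1.
have intQ : pi.-integrable setT (EFin \o (fun z => psi z.2)).
  exact: bounded_integrable pifin mpsi2 (fun z => psiB z.2).
have mnphi : measurable_fun [set: borel X] (fun x => - phi x)%R.
  exact: measurable_funN mphi.
have rfin1 : pushforward pi fst setT < +oo by rewrite /pushforward preimage_setT.
have rfin2 : pushforward pi snd setT < +oo by rewrite /pushforward preimage_setT.
have nphiB : forall x, (`|- phi x| <= Mp)%R by move=> x; rewrite normrN.
have C1 := @energy_lb _ _ R h0 hh0 mu (pushforward pi fst) (fun x => - phi x)%R Mp (fin_lt mu) rfin1 mnphi nphiB.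
have C2 := @energy_lb _ _ R h1 hh1 nu (pushforward pi snd) psi (Mp + K)%R (fin_lt nu) rfin2 mpsi psiB.
have E1 : \int[pushforward pi fst]_x (- phi x)%:E = \int[pi]_z (- phi z.1)%:E.
  have := @integral_pushforward _ _ _ _ R fst measurable_fst pi setT (EFin \o (fun x => - phi x)%R).
  rewrite preimage_setT; apply => //; exact/measurable_EFinP.
have E2 : \int[pushforward pi snd]_x (psi x)%:E = \int[pi]_z (psi z.2)%:E.
  have := @integral_pushforward _ _ _ _ R snd measurable_snd pi setT (EFin \o psi).
  rewrite preimage_setT; apply => //; exact/measurable_EFinP.
have {C1}C1 := C1 measurable_fst; have {C2}C2 := C2 measurable_snd.
have C1' : \int[pi]_z (- phi z.1)%:E - \int[mu]_x (conj_fun h0 (- phi x))%:E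
    <= internal_energy h0 mu (pushforward pi fst) by rewrite -E1.
have C2' : \int[pi]_z (psi z.2)%:E - \int[nu]_x (conj_fun h1 (psi x))%:E
    <= internal_energy h1 nu (pushforward pi snd) by rewrite -E2.
have C3 : \int[pi]_z (phi z.1)%:E - \int[pi]_z (psi z.2)%:E <= \int[pi]_z (c z)%:E.
  rewrite -integralB_EFin //; apply: le_integral_gen => -[x y] /=.
  by rewrite lee_fin; have := ctrans_ge hB x y; rewrite /psi; lra.
have mc0 : measurable_fun [set: borel X] (fun x => conj_fun h0 (- phi x)).
  exact: measurableT_comp (continuous_measurable_fun (conj_continuous hh0)) mnphi.
have mc1 : measurable_fun [set: borel Y] (fun y => conj_fun h1 (psi y)).
  exact: measurableT_comp (continuous_measurable_fun (conj_continuous hh1)) mpsi.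
have intAc := bounded_integrable (fin_lt mu) mc0 (@conj_bounded _ (borel X) R h0 hh0 (fun x => - phi x)%R Mp nphiB).
have intA : mu.-integrable setT (EFin \o (fun x => - conj_fun h0 (- phi x))%R).
  apply: bounded_integrable (fin_lt mu) (measurable_funN mc0) _ => x.
  by rewrite /= normrN; exact: (@conj_bounded _ (borel X) R h0 hh0 (fun x => - phi x)%R Mp nphiB x).
have intB := bounded_integrable (fin_lt nu) mc1 (@conj_bounded _ (borel Y) R h1 hh1 psi _ psiB).
have S1 : \int[pi]_z (- phi z.1)%:E + \int[pi]_z (phi z.1)%:E = 0.
  rewrite -integralD_EFin //; rewrite (eq_integral (fun=> 0)) ?integral0 //.
  by move=> z _ /=; rewrite -EFinD addNr.
have S2 : \int[mu]_x (- conj_fun h0 (- phi x))%:E + \int[mu]_x (conj_fun h0 (- phi x))%:E = 0.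
  rewrite -integralD_EFin //; rewrite (eq_integral (fun=> 0)) ?integral0 //.
  by move=> z _ /=; rewrite -EFinD addNr.
rewrite /dual_fun.
apply: ereal_arith C1' C2' C3 S1 S2; exact: integrable_fin_num.
Qed.

End Weak.
Section Main.
Local Open Scope ereal_scope.
Variable R : realType.
Variables (X Y : pmetricType R) (c : X * Y -> R) (h0 h1 : R -> R).
Variable (nu : {finite_measure set borel Y -> \bar R}).
Hypotheses (cX : compact [set: X]) (cY : compact [set: Y]) (cc : continuous c)
  (hh0 : entropy_fun h0) (hh1 : entropy_fun h1).

Lemma f0c (g : X -> R) : continuous g -> continuous (fun x => - conj_fun h0 (- g x))%R.
Proof.
move=> gc x.
apply: (@continuous_comp _ _ _ (fun x => conj_fun h0 (- g x))%R -%R); last exact: opp_continuous.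
apply: (@continuous_comp _ _ _ (fun x => - g x)%R (conj_fun h0)); last exact: conj_continuous.
apply: (@continuous_comp _ _ _ g -%R); last exact: opp_continuous.
exact: gc.
Qed.

Lemma int_cont (mu : {finite_measure set borel X -> \bar R}) (g : X -> R) :
  continuous g -> mu.-integrable setT (EFin \o g).
Proof.
move=> gc; have [B [_ gB]] := cont_bounded cX gc.
exact: bounded_integrable (fin_lt mu) (cont_measurable gc) gB.
Qed.

Lemma ctrans_bound (phi : X -> R) : continuous phi -> exists B : R,
  (forall x y, phi x - c (x, y) <= B)%R /\ forall y, (`|ctrans c phi y| <= B)%R.
Proof.
move=> phic.
have [K [K0 cK]] := c_bounded cX cY cc.
have [Mp [Mp0 phiM]] := cont_bounded cX phic.
have hB : forall x y, (phi x - c (x, y) <= Mp + K)%R.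
  move=> x y; have := phiM x; have := cK (x, y).
  rewrite !ler_norml => /andP[? ?] /andP[? ?]; lra.
exists (Mp + K)%R; split => // y; rewrite ler_norml; apply/andP; split.
  have := ctrans_ge hB point y; have := phiM point; have := cK (point, y).
  rewrite !ler_norml => /andP[? ?] /andP[? ?]; lra.
by apply: ctrans_le => x; apply: hB.
Qed.

Lemma int_conj_ctrans (phi : X -> R) : continuous phi ->
  nu.-integrable setT (EFin \o (fun y => conj_fun h1 (ctrans c phi y))).
Proof.
move=> phic; have [B [hB psiB]] := ctrans_bound phic.
have mpsi : measurable_fun [set: borel Y] (ctrans c phi) := lsc_measurable (ctrans_lsc cc hB).
have mc1 : measurable_fun [set: borel Y] (fun y => conj_fun h1 (ctrans c phi y)).
  exact: measurableT_comp (continuous_measurable_fun (conj_continuous hh1)) mpsi.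
exact: bounded_integrable (fin_lt nu) mc1 (@conj_bounded _ (borel Y) R h1 hh1 _ _ psiB).
Qed.

Lemma ctrans_mono (phi psi : X -> R) : continuous psi -> (forall x, phi x <= psi x)%R ->
  forall y, (ctrans c phi y <= ctrans c psi y)%R.
Proof.
move=> psic le y; have [B [hB _]] := ctrans_bound psic.
apply: ctrans_le => x; apply: le_trans (ctrans_ge hB x y).
by rewrite lerD2r.
Qed.

End Main.

Section Arith.
Local Open Scope ereal_scope.
Variable R : realType.

Lemma ereal_arith2 (a1m a1 a2M a2 b1m b1 b2M b2 d1 d2 : \bar R) :
  a1m \is a fin_num -> a1 \is a fin_num -> a2M \is a fin_num -> a2 \is a fin_num ->
  b1m \is a fin_num -> b1 \is a fin_num -> b2M \is a fin_num -> b2 \is a fin_num ->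
  d1 \is a fin_num -> d2 \is a fin_num ->
  a1m = a1 - d1 -> a2M = a2 + d2 -> b1m + b2M <= b1 + b2 -> d1 <= d2 ->
  a1m - b1m <= a1 - b1 -> a2M - b2M <= a2 - b2 ->
  [/\ a1m - b1m = a1 - b1, a2M - b2M = a2 - b2 & d2 <= d1].
Proof.
case: a1m => // a1m _; case: a1 => // a1 _; case: a2M => // a2M _; case: a2 => // a2 _.
case: b1m => // b1m _; case: b1 => // b1 _; case: b2M => // b2M _; case: b2 => // b2 _.
case: d1 => // d1 _; case: d2 => // d2 _.
rewrite -!EFinB -!EFinD !lee_fin => -[e1] [e2] l1 l2 l3 l4.
by split; [congr EFin; lra | congr EFin; lra | lra].
Qed.

Lemma ereal_arith3 (e1 e2 a1 a2 : \bar R) (eps : R) :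
  e1 \is a fin_num -> e2 \is a fin_num -> a1 \is a fin_num -> a2 \is a fin_num ->
  (0 < eps)%R -> e2 + eps%:E * a2 <= e1 + eps%:E * a1 -> e1 <= e2 -> a2 <= a1.
Proof.
case: e1 => // e1 _; case: e2 => // e2 _; case: a1 => // a1 _; case: a2 => // a2 _.
move=> eps0; rewrite -!EFinM -!EFinD !lee_fin => l1 l2.
by rewrite -(ler_pM2l eps0); lra.
Qed.

End Arith.


Unset Implicit Arguments.
Theorem theorem3p19 (R : realType) (X Y : pmetricType R)
    (c : X * Y -> R) (h0 h1 : R -> R)
    (mu1 mu2 : {finite_measure set borel X -> \bar R})
    (nu : {finite_measure set borel Y -> \bar R})
    (phi1 phi2 : X -> R) (U : set (borel X)) :
  compact [set: X] -> compact [set: Y] -> continuous c ->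
  entropy_fun h0 -> entropy_fun h1 ->
  Phi h0 h1 c mu1 nu phi1 -> Phi h0 h1 c mu2 nu phi2 ->
  measurable U ->
  measure_le_on mu1 mu2 U ->
  (forall x, ~ U x -> phi1 x <= phi2 x) ->
  [/\ Phi h0 h1 c mu1 nu (fun x => Num.min (phi1 x) (phi2 x)),
      Phi h0 h1 c mu2 nu (fun x => Num.max (phi1 x) (phi2 x)) &
      forall x, signed_support mu1 mu2 x ->
        - conj_fun h0 (- phi1 x) <= - conj_fun h0 (- phi2 x)].
Proof.
move=> cX cY cc hh0 hh1 [phi1c D1] [phi2c D2] mU mle hU.
pose f0 := fun r : R => - conj_fun h0 (- r).
have f0mono : {homo f0 : a b / a <= b}.
  by move=> a b ab; rewrite /f0 lerN2 (conj_mono hh0) // lerN2.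
pose m := fun x => Num.min (phi1 x) (phi2 x).
pose M := fun x => Num.max (phi1 x) (phi2 x).
have mc : continuous m := min_fun_continuous phi1c phi2c.
have Mc : continuous M := max_fun_continuous phi1c phi2c.
pose Dw := fun x => f0 (phi1 x) - f0 (m x).
have Dw0 : forall x, 0 <= Dw x.
  by move=> x; rewrite subr_ge0 f0mono // ge_min lexx.
have DwU : forall x, ~ U x -> Dw x = 0.
  by move=> x /hU h; rewrite /Dw /m min_l // subrr.
have Dwc : continuous Dw.
  move=> x; apply: (@continuousB _ _ _ (fun x => f0 (phi1 x)) (fun x => f0 (m x))).
    exact: (f0c hh0 phi1c).
  exact: (f0c hh0 mc).
have i1 := int_cont cX mu1 (f0c hh0 phi1c).
have i2 := int_cont cX mu2 (f0c hh0 phi2c).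
have i1m := int_cont cX mu1 (f0c hh0 mc).
have i2M := int_cont cX mu2 (f0c hh0 Mc).
have iD1 := int_cont cX mu1 Dwc.
have iD2 := int_cont cX mu2 Dwc.
have eA1 : (\int[mu1]_x (f0 (m x))%:E = \int[mu1]_x (f0 (phi1 x))%:E - \int[mu1]_x (Dw x)%:E)%E.
  rewrite -integralB_EFin //; apply: eq_integral => x _; congr EFin.
  by rewrite /Dw; ring.
have eA2 : (\int[mu2]_x (f0 (M x))%:E = \int[mu2]_x (f0 (phi2 x))%:E + \int[mu2]_x (Dw x)%:E)%E.
  rewrite -(integralD_EFin measurableT i2 iD2); apply: eq_integral => x _ /=; rewrite -EFinD; congr EFin.
  rewrite /Dw /m /M /f0; case: (leP (phi1 x) (phi2 x)) => _; ring.
have Dle : (\int[mu1]_x (Dw x)%:E <= \int[mu2]_x (Dw x)%:E)%E.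
  apply: (le_integral_on mle) => x; first by rewrite lee_fin.
  by move=> /DwU ->.
have [B1 [hB1 _]] := ctrans_bound cX cY cc phi1c.
have [B2 [hB2 _]] := ctrans_bound cX cY cc phi2c.
have Gle : forall y, conj_fun h1 (ctrans c m y) + conj_fun h1 (ctrans c M y) <=
    conj_fun h1 (ctrans c phi1 y) + conj_fun h1 (ctrans c phi2 y).
  move=> y.
  have ma : ctrans c m y <= ctrans c phi1 y.
    by apply: (ctrans_mono cX cY cc phi1c) => x; rewrite /m ge_min lexx.
  have mb : ctrans c m y <= ctrans c phi2 y.
    by apply: (ctrans_mono cX cY cc phi2c) => x; rewrite /m ge_min lexx orbT.
  have Mab : ctrans c M y <= Num.max (ctrans c phi1 y) (ctrans c phi2 y).
    apply: ctrans_le => x; rewrite /M; case: (leP (phi1 x) (phi2 x)) => _.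
      by rewrite le_max (ctrans_ge hB2 x y) orbT.
    by rewrite le_max (ctrans_ge hB1 x y).
  move: Mab; case: (leP (ctrans c phi1 y) (ctrans c phi2 y)) => _ Mab.
    by apply: lerD; apply: conj_mono.
  by rewrite addrC; apply: lerD; apply: conj_mono.
have j1 := int_conj_ctrans nu cX cY cc hh1 phi1c.
have j2 := int_conj_ctrans nu cX cY cc hh1 phi2c.
have j1m := int_conj_ctrans nu cX cY cc hh1 mc.
have j2M := int_conj_ctrans nu cX cY cc hh1 Mc.
have Ble : (\int[nu]_y (conj_fun h1 (ctrans c m y))%:E + \int[nu]_y (conj_fun h1 (ctrans c M y))%:E <=
    \int[nu]_y (conj_fun h1 (ctrans c phi1 y))%:E + \int[nu]_y (conj_fun h1 (ctrans c phi2 y))%:E)%E.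
  rewrite -(integralD_EFin measurableT j1m j2M) -(integralD_EFin measurableT j1 j2).
  by apply: le_integral_gen => y /=; rewrite -!EFinD lee_fin.
have W1 := weak_duality mu1 nu cX cY cc hh0 hh1 mc.
have W2 := weak_duality mu2 nu cX cY cc hh0 hh1 Mc.
rewrite -D1 in W1; rewrite -D2 in W2.
have [E1 E2 d21] := ereal_arith2 (integrable_fin_num measurableT i1m) (integrable_fin_num measurableT i1)
  (integrable_fin_num measurableT i2M) (integrable_fin_num measurableT i2)
  (integrable_fin_num measurableT j1m) (integrable_fin_num measurableT j1)
  (integrable_fin_num measurableT j2M) (integrable_fin_num measurableT j2)
  (integrable_fin_num measurableT iD1) (integrable_fin_num measurableT iD2)
  eA1 eA2 Ble Dle W1 W2.
clear W1 W2 Ble Gle eA1 eA2 j1 j2 j1m j2M i1m i2M i1 i2 Dle.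
split.
- split; first exact: mc.
  rewrite -D1; exact: E1.
- split; first exact: Mc.
  rewrite -D2; exact: E2.
clear E1 E2 D1 D2 hB1 hB2 B1 B2 iD1 iD2.
move=> x sx; change (f0 (phi1 x) <= f0 (phi2 x)).
rewrite leNgt; apply/negP => lt21.
have p21 : phi2 x < phi1 x.
  by rewrite ltNge; apply/negP => /f0mono; rewrite leNgt lt21.
have Dwx : Dw x = f0 (phi1 x) - f0 (phi2 x) by rewrite /Dw /m (min_r (ltW p21)).
pose eps := Dw x / 2.
have Dpos : 0 < Dw x by rewrite Dwx subr_gt0.
have eps0 : 0 < eps by rewrite /eps divr_gt0.
pose N := [set y | eps < Dw y].
have oN : open N := cont_open_gt eps Dwc.
have Nx : N x by rewrite /N /eps /=; lra.
have NU : N `<=` U.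
  move=> y Ny; apply/not_notP => nU; move: Ny; rewrite /N /= (DwU _ nU).
  by rewrite ltNge (ltW eps0).
have [BD [_ DB]] := cont_bounded cX Dwc.
have muA : forall A : set (borel X), measurable A -> A `<=` N -> (mu2 A <= mu1 A)%E.
  move=> A mA AN.
  pose Ew := fun y => Dw y - eps * \1_A y.
  have Ew0 : forall y, 0 <= Ew y.
    move=> y; rewrite /Ew indicE; case: (boolP (y \in A)) => [/set_mem /AN Ny | _].
      by rewrite mulr1 subr_ge0 ltW.
    by rewrite mulr0 subr0; exact: Dw0.
  have EwU : forall y, ~ U y -> Ew y = 0.
    move=> y nU; rewrite /Ew (DwU _ nU) indicE memNset; first by rewrite mulr0 subr0.
    by move=> /AN /NU.
  have mEw : measurable_fun [set: borel X] Ew.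
    apply: measurable_funB; first exact: cont_measurable Dwc.
    by apply: measurable_funM => //; exact: measurable_indic.
  have EwB : forall y, `|Ew y| <= BD + eps.
    move=> y; rewrite (ger0_norm (Ew0 y)); have := DB y.
    have : 0 <= eps * \1_A y by rewrite (mulr_ge0 (ltW eps0)) // indicE ler0n.
    rewrite /Ew ler_norml => ? /andP[? ?]; lra.
  have iE1 := bounded_integrable (fin_lt mu1) mEw EwB.
  have iE2 := bounded_integrable (fin_lt mu2) mEw EwB.
  have dec : forall (mu : {finite_measure set borel X -> \bar R}),
      (\int[mu]_y (Dw y)%:E = \int[mu]_y (Ew y)%:E + eps%:E * mu A)%E.
    move=> mu; have iE := bounded_integrable (fin_lt mu) mEw EwB.
    rewrite (eq_integral (fun y : borel X => (Ew y)%:E + eps%:E * (\1_A y)%:E)%E); last first.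
      by move=> y _; rewrite -EFinM -EFinD /Ew subrK.
    rewrite integralD //; last exact: integrableZl (integrable_indic mu mA).
    by rewrite integralZl ?integral_indic ?setIT //; exact: integrable_indic.
  apply: (@ereal_arith3 _ (\int[mu1]_y (Ew y)%:E) (\int[mu2]_y (Ew y)%:E) _ _ eps).
  - exact: (integrable_fin_num measurableT iE1).
  - exact: (integrable_fin_num measurableT iE2).
  - exact: fin_num_measure.
  - exact: fin_num_measure.
  - exact: eps0.
  - by rewrite -!dec.
  - apply: (le_integral_on mle) => y; first by rewrite lee_fin.
    by move=> /EwU ->.
have := sx N oN Nx; apply/negP; rewrite negbK; apply/eqP.
rewrite /total_variation; apply/eqP; rewrite eq_le; apply/andP; split.
  apply: ge_ereal_sup => _ [n _ [A [HA _] <-]].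
  rewrite lee_fin big1 // => i _.
  have [mAi AiN] := HA i.
  have e : mu1 (A i) = mu2 (A i).
    by apply/eqP; rewrite eq_le (mle _ mAi (subset_trans AiN NU)) (muA _ mAi AiN).
  by rewrite e subrr normr0.
apply: ereal_sup_ubound; exists 0%N => //; exists (fun _ => set0); last by rewrite big_ord0.
by split => [i|i j _]; [split | rewrite setI0].
Qed.
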